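(* Let $k\ge3$ and $n\ge k+2$, let $\ell=\lceil n/(k+1)\rceil-1$, and let $\mathcal{X}_{n,k}=(Q,\Sigma,\delta)$ with $Q=\{0,\dots,n-1\}$, $\Sigma=\{a_1,\dots,a_k\}$ and $\delta$ defined by: for each $0\le i\le\ell-1$ and $1\le j\le k$, $\delta((k+1)i,a_j)=(k+1)i+j$ and $\delta((k+1)i+1,a_1)=(k+1)(i+1)$; for each $i$ with $(k+1)\ell\le i\le n-2$, $\delta(i,a_1)=i+1$; and $\delta(i,a_j)=0$ for all remaining pairs $(i,a_j)$. Then $\mathcal{X}_{n,k}$ (which is the decoder of a maximal finite prefix code over $\Sigma$) is synchronizing and its reset threshold equals $2\ell+2=2\lceil n/(k+1)\rceil$.
   Context: For a DFA $(Q,\Sigma,\delta)$ with transitions extended to words, a reset word is a word $w$ with $|\{\delta(q,w)\mid q\in Q\}|=1$; the DFA is synchronizing if one exists, and its reset threshold is the length of a shortest reset word. *)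

(* Defs.v *)
From mathcomp Require Import all_boot.
Set Implicit Arguments. Unset Strict Implicit. Unset Printing Implicit Defensive.

Definition delta_word (Q S : finType) (d : Q -> S -> Q) (q : Q) (w : seq S) : Q :=
  foldl d q w.

Definition reset_word (Q S : finType) (d : Q -> S -> Q) (w : seq S) : Prop :=
  #|[set delta_word d q w | q : Q]| = 1.

Definition synchronizing (Q S : finType) (d : Q -> S -> Q) : Prop :=
  exists w : seq S, reset_word d w.

Definition reset_threshold_is (Q S : finType) (d : Q -> S -> Q) (m : nat) : Prop :=
  (exists w : seq S, reset_word d w /\ size w = m) /\
  (forall w : seq S, reset_word d w -> m <= size w).

(* ell = ceil(n/(k+1)) - 1 *)
Definition ell (n k : nat) : nat := (n + k) %/ k.+1 - 1.

(* transition on naturals; letter a_j is given by j in 1..k *)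
Definition X_nat (n k q j : nat) : nat :=
  let l := ell n k in
  if (q %% k.+1 == 0) && (q %/ k.+1 < l) then q + j
  else if (q %% k.+1 == 1) && (q %/ k.+1 < l) && (j == 1) then (q %/ k.+1).+1 * k.+1
  else if (k.+1 * l <= q) && (q <= n - 2) && (j == 1) then q.+1
  else 0.

(* Q = 'I_n, letters a_1..a_k represented by a : 'I_k, i.e. a_(a+1).
   The value is always < n; the "%% n" only serves to build an ordinal
   and is the identity (see lemma X_nat_lt). *)
Definition X_delta (n k : nat) (q : 'I_n) (a : 'I_k) : 'I_n :=
  @Ordinal n (X_nat n k q a.+1 %% n)
    (ltn_pmod _ (leq_ltn_trans (leq0n q) (ltn_ord q))).

(* Main.v *)
Require Import Defs.
From mathcomp Require Import all_boot zify.

Lemma ell_ge1 n k : k + 2 <= n -> 1 <= ell n k.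
Proof.
move=> hn; rewrite /ell.
have : 2 <= (n + k) %/ k.+1 by rewrite leq_divRL //; lia.
lia.
Qed.

Lemma ell_lt n k : k + 2 <= n -> k.+1 * ell n k <= n.-1.
Proof.
move=> hn; rewrite /ell.
have := leq_trunc_div (n + k) k.+1.
set d := (n + k) %/ k.+1 => h. rewrite mulnBr muln1. nia.
Qed.

Lemma X_nat_lt n k q j : k + 2 <= n -> q < n -> 1 <= j <= k -> X_nat n k q j < n.
Proof.
move=> hn hq /andP[j1 jk]; have hl := ell_lt n k hn.
rewrite /X_nat.
case: ifP => [/andP[/eqP h1 h2]|_].
  have : q %/ k.+1 * k.+1 + q %% k.+1 = q by rewrite -divn_eq.
  rewrite h1 => e. have : q %/ k.+1 + 1 <= ell n k by lia. nia.
case: ifP => [/andP[/andP[_ h2] _]|_].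
  have : (q %/ k.+1).+1 <= ell n k by lia. nia.
case: ifP => [/andP[/andP[_ h] _]|_]; lia.
Qed.

Definition Dn n k x (w : seq 'I_k) := foldl (fun y (a : 'I_k) => X_nat n k y a.+1) x w.

Lemma Dn_val n k (hn : k + 2 <= n) (q : 'I_n) w :
  val (delta_word (@X_delta n k) q w) = Dn n k q w.
Proof.
rewrite /delta_word /Dn; elim: w q => [|a w IH] q //=.
rewrite IH /=; congr foldl; rewrite modn_small //.
have := ltn_ord a => ha; apply: X_nat_lt => //; lia.
Qed.

Lemma Dn_rcons n k x w a : Dn n k x (rcons w a) = X_nat n k (Dn n k x w) a.+1.
Proof. by rewrite /Dn foldl_rcons. Qed.

Definition pth n k i : nat :=
  if i < 2 * ell n k then k.+1 * (i %/ 2) + i %% 2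
  else k.+1 * ell n k + (i - 2 * ell n k).
Definition LL n k := 2 * ell n k + (n.-1 - k.+1 * ell n k).
Definition leaf n k x := (2 <= x %% k.+1) && (x < k.+1 * ell n k).

Lemma pth_even n k m : m < ell n k -> pth n k (2 * m) = k.+1 * m.
Proof. move=> h; rewrite /pth ifT; last lia.
have -> : (2 * m) %/ 2 = m by lia. have -> : (2 * m) %% 2 = 0 by lia. by rewrite addn0. Qed.

Lemma pth_odd n k m : m < ell n k -> pth n k (2 * m + 1) = k.+1 * m + 1.
Proof. move=> h; rewrite /pth ifT; last lia.
have -> : (2 * m + 1) %/ 2 = m by lia. by have -> : (2 * m + 1) %% 2 = 1 by lia. Qed.

Lemma pth_tail n k i : 2 * ell n k <= i -> pth n k i = k.+1 * ell n k + (i - 2 * ell n k).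
Proof. by move=> h; rewrite /pth ifF //; lia. Qed.

Lemma par i : exists m, i = 2 * m \/ i = 2 * m + 1.
Proof. exists (i %/ 2); lia. Qed.

Lemma modK0 k m : (k.+1 * m) %% k.+1 = 0.
Proof. by rewrite mulnC modnMl. Qed.
Lemma divK0 k m : (k.+1 * m) %/ k.+1 = m.
Proof. by rewrite mulKn. Qed.
Lemma modKj k m j : j < k.+1 -> (k.+1 * m + j) %% k.+1 = j.
Proof. by move=> h; rewrite mulnC modnMDl modn_small. Qed.
Lemma divKj k m j : j < k.+1 -> (k.+1 * m + j) %/ k.+1 = m.
Proof. by move=> h; rewrite mulnC divnMDl // divn_small // addn0. Qed.

Lemma X_bs n k m j : m < ell n k -> X_nat n k (k.+1 * m) j = k.+1 * m + j.
Proof. by move=> h; rewrite /X_nat modK0 divK0 h. Qed.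

Lemma X_big0 n k x j : 2 <= j -> ~~ ((x %% k.+1 == 0) && (x %/ k.+1 < ell n k)) -> X_nat n k x j = 0.
Proof.
move=> hj h; rewrite /X_nat (negbTE h).
have -> : (j == 1) = false by apply/eqP; lia.
by rewrite !andbF.
Qed.

Lemma X_leaf n k x j : leaf n k x -> X_nat n k x j = 0.
Proof.
case/andP=> h1 h2; rewrite /X_nat.
have -> : (x %% k.+1 == 0) = false by apply/eqP; lia.
have -> : (x %% k.+1 == 1) = false by apply/eqP; lia.
have -> : (k.+1 * ell n k <= x) = false by lia.
by [].
Qed.

Lemma X_odd n k m j : 3 <= k -> m < ell n k ->
  X_nat n k (k.+1 * m + 1) j = if j == 1 then k.+1 * m.+1 else 0.
Proof.
move=> hk h; have h1 : 1 < k.+1 by lia.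
rewrite /X_nat (modKj k m 1 h1) (divKj k m 1 h1) h /=.
have -> : (k.+1 * ell n k <= k.+1 * m + 1) = false.
  have : k.+1 * m.+1 <= k.+1 * ell n k by rewrite leq_mul2l.
  rewrite mulnS; lia.
by case: (j == 1); rewrite ?andbF ?andbT // mulnC.
Qed.

Lemma X_tail n k x j : k.+1 * ell n k <= x ->
  X_nat n k x j = if (x <= n - 2) && (j == 1) then x.+1 else 0.
Proof.
move=> h; rewrite /X_nat.
have -> : (x %/ k.+1 < ell n k) = false.
  by rewrite ltn_divLR // mulnC ltnNge h.
by rewrite !andbF h.
Qed.

Lemma pth0 n k : k + 2 <= n -> pth n k 0 = 0.
Proof. move=> hn; have := ell_ge1 n k hn => h. by rewrite (pth_even n k 0 h) muln0. Qed.
Lemma pth1 n k : k + 2 <= n -> pth n k 1 = 1.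
Proof. move=> hn; have := ell_ge1 n k hn => h. by rewrite (pth_odd n k 0 h) muln0. Qed.

Lemma pth_LL n k : k + 2 <= n -> pth n k (LL n k) = n.-1.
Proof. move=> hn; have := ell_lt n k hn => h. rewrite pth_tail /LL; lia. Qed.

Lemma pth_step n k i : 3 <= k -> pth n k i < pth n k i.+1.
Proof.
move=> hk.
case: (ltnP i.+1 (2 * ell n k)) => h.
  have [m [e|e]] := par i; subst i.
    rewrite pth_even; last lia. have -> : (2 * m).+1 = 2 * m + 1 by lia. rewrite pth_odd; lia.
  rewrite pth_odd; last lia. have -> : (2 * m + 1).+1 = 2 * m.+1 by lia.
  rewrite pth_even; last lia. rewrite mulnS; lia.
case: (ltnP i (2 * ell n k)) => h2.
  have e : i = 2 * (ell n k).-1 + 1 by lia.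
  rewrite e pth_odd; last lia. rewrite -e pth_tail; last lia.
  have -> : ell n k = (ell n k).-1.+1 by lia. rewrite mulnS. lia.
rewrite !pth_tail //; lia.
Qed.

Lemma pth_lt n k i : 3 <= k -> k + 2 <= n -> i <= LL n k -> pth n k i < n.
Proof.
move=> hk hn hi. have : pth n k i <= pth n k (LL n k).
  apply: (homo_leq (f := pth n k) (r := leq)) => //.
  - by move=> y x z; apply: leq_trans.
  - by move=> j; apply: ltnW; apply: pth_step.
rewrite pth_LL //; lia.
Qed.

Lemma X_path1 n k i : 3 <= k -> k + 2 <= n -> i < LL n k ->
  X_nat n k (pth n k i) 1 = pth n k i.+1.
Proof.
move=> hk hn hi; have hl := ell_lt n k hn.
case: (ltnP i (2 * ell n k)) => h.
  have [m [e|e]] := par i; subst i.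
    rewrite pth_even; last lia. rewrite X_bs; last lia.
    have -> : (2 * m).+1 = 2 * m + 1 by lia. by rewrite pth_odd //; lia.
  rewrite pth_odd; last lia. rewrite X_odd //; last lia.
  have -> : (2 * m + 1).+1 = 2 * m.+1 by lia.
  case: (ltnP m.+1 (ell n k)) => h3.
    by rewrite pth_even.
  rewrite pth_tail; last lia. have -> : m.+1 = ell n k by lia. by rewrite eqxx subnn addn0.
rewrite pth_tail // X_tail; last lia.
rewrite pth_tail; last lia. rewrite ifT; last (apply/andP; split => //; rewrite /LL in hi; lia).
lia.
Qed.

Lemma X_LL n k j : k + 2 <= n -> X_nat n k (pth n k (LL n k)) j = 0.
Proof.
move=> hn; have hl := ell_lt n k hn. rewrite pth_LL // X_tail; last lia.
rewrite ifF //; apply/negbTE; rewrite negb_and; apply/orP; left; lia.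
Qed.

Lemma bs_leaf n k m j : m < ell n k -> 2 <= j <= k -> leaf n k (X_nat n k (k.+1 * m) j).
Proof.
move=> h /andP[j2 jk]; rewrite X_bs // /leaf modKj; last lia.
apply/andP; split => //.
have : k.+1 * m.+1 <= k.+1 * ell n k by rewrite leq_mul2l.
rewrite mulnS; lia.
Qed.

Lemma leaf_neq0 n k x : leaf n k x -> x != 0.
Proof. by case/andP => h _; apply/eqP => e; rewrite e mod0n in h. Qed.

Definition Inv n k (u : seq 'I_k) :=
  [\/ (forall i, i <= LL n k -> exists2 x, x < n & Dn n k x u = pth n k i),
      (0 < size u /\ exists x y, [/\ x < n, y < n, Dn n k x u = 0 & leaf n k (Dn n k y u)]) |
      exists r x y, [/\ r.+2 <= size u, x < n, y < n, Dn n k x u = pth n k r & Dn n k y u = pth n k r.+1]].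

Lemma inv_all n k (hk : 3 <= k) (hn : k + 2 <= n) (u : seq 'I_k) :
  size u <= 2 * ell n k + 1 -> Inv n k u.
Proof.
have hl1 := ell_ge1 n k hn; have hl := ell_lt n k hn.
have hLL : 2 * ell n k <= LL n k by rewrite /LL; lia.
elim/last_ind: u => [|u a IH].
  move=> _; apply: Or31 => i hi; exists (pth n k i) => //; exact: pth_lt.
rewrite size_rcons => hs; have := IH (ltnW hs) => {IH}.
have ha := ltn_ord a.
case: (eqVneq (val a) 0) => [a0|a0].
-
  case=> [hP|[su [x [y [hx hy ex ey]]]]|[r [x [y [hr hx hy ex ey]]]]].
  + apply: Or31 => i hi; case: i hi => [|i] hi.
      have [x hx ex] := hP (LL n k) (leqnn _).
      exists x => //; rewrite Dn_rcons ex X_LL // pth0 //.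
    have [x hx ex] := hP i (ltnW hi).
    exists x => //; rewrite Dn_rcons ex a0 X_path1 //.
  + apply: Or33; exists 0, y, x; split => //; rewrite ?size_rcons //; try lia.
      by rewrite Dn_rcons a0 X_leaf // pth0.
    by rewrite Dn_rcons ex a0 pth1 // -(muln0 k.+1) X_bs // muln0.
  + apply: Or33; exists r.+1, x, y; split => //; rewrite ?size_rcons //.
    - by rewrite Dn_rcons ex a0 X_path1 //; lia.
    - by rewrite Dn_rcons ey a0 X_path1 //; lia.
-
  have a0p : 0 < a by rewrite lt0n; exact: a0.
  have hj : 2 <= a.+1 <= k by apply/andP; split; lia.
  case=> [hP|[su [x [y [hx hy ex ey]]]]|[r [x [y [hr hx hy ex ey]]]]].
  + have [x hx ex] := hP 0 (leq0n _).
    have [y hy ey] := hP 1 ltac:(lia).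
    apply: Or32; split; rewrite ?size_rcons //; exists y, x; split => //.
      rewrite Dn_rcons ey pth1 //; have := X_odd n k 0 a.+1 hk hl1; rewrite muln0 add0n => ->; rewrite ifF //; apply/eqP; lia.
    rewrite Dn_rcons ex pth0 //; have := bs_leaf n k 0 a.+1 hl1 hj; by rewrite muln0.
  + apply: Or32; split; rewrite ?size_rcons //; exists y, x; split => //.
      by rewrite Dn_rcons X_leaf.
    rewrite Dn_rcons ex; have := bs_leaf n k 0 a.+1 hl1 hj; by rewrite muln0.
  + apply: Or32; split; rewrite ?size_rcons //.
    have [m [e|e]] := par r; subst r.
    * exists y, x; split => //.
        rewrite Dn_rcons ey; have -> : (2 * m).+1 = 2 * m + 1 by lia.
        rewrite pth_odd; last lia. rewrite X_odd //; last lia. rewrite ifF //; apply/eqP; lia.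
      rewrite Dn_rcons ex pth_even; last lia. apply: bs_leaf => //; lia.
    * exists x, y; split => //.
        rewrite Dn_rcons ex pth_odd; last lia. rewrite X_odd //; last lia. rewrite ifF //; apply/eqP; lia.
      rewrite Dn_rcons ey; have -> : (2 * m + 1).+1 = 2 * m.+1 by lia.
      rewrite pth_even; last lia. apply: bs_leaf => //; lia.
Qed.

Lemma two_distinct n k (hn : k + 2 <= n) (w : seq 'I_k) x y :
  x < n -> y < n -> Dn n k x w != Dn n k y w -> ~ reset_word (@X_delta n k) w.
Proof.
move=> hx hy ne hr.
have /cards1P [c hc] : #|[set delta_word (@X_delta n k) q w | q : 'I_n]| == 1 by rewrite hr.
have e1 : delta_word (@X_delta n k) (Ordinal hx) w = c.
  apply/set1P; rewrite -hc; apply: imset_f; done.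
have e2 : delta_word (@X_delta n k) (Ordinal hy) w = c.
  apply/set1P; rewrite -hc; apply: imset_f; done.
move: ne; rewrite -(Dn_val n k hn (Ordinal hx)) -(Dn_val n k hn (Ordinal hy)) e1 e2.
by rewrite eqxx.
Qed.

Lemma lower n k (hk : 3 <= k) (hn : k + 2 <= n) (w : seq 'I_k) :
  reset_word (@X_delta n k) w -> 2 * ell n k + 2 <= size w.
Proof.
move=> hr; rewrite leqNgt; apply/negP => hs.
have hl1 := ell_ge1 n k hn; have hl := ell_lt n k hn.
have hLL : 2 * ell n k <= LL n k by rewrite /LL; lia.
case: (inv_all n k hk hn w ltac:(lia)) => [hP|[su [x [y [hx hy ex ey]]]]|[r [x [y [hr' hx hy ex ey]]]]].
- have [x hx ex] := hP 0 (leq0n _).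
  have [y hy ey] := hP 1 ltac:(lia).
  apply: (two_distinct n k hn w x y hx hy _ hr); by rewrite ex ey pth0 // pth1.
- apply: (two_distinct n k hn w x y hx hy _ hr); rewrite ex; apply/eqP => e; move: (leaf_neq0 n k _ ey); by rewrite -e eqxx.
- apply: (two_distinct n k hn w x y hx hy _ hr); rewrite ex ey neq_ltn pth_step //.
Qed.

Lemma Dn_cat n k x u v : Dn n k x (u ++ v) = Dn n k (Dn n k x u) v.
Proof. by rewrite /Dn foldl_cat. Qed.

Lemma Dn_nseq n k (hk : 3 <= k) (hn : k + 2 <= n) (a1 : 'I_k) (h1 : val a1 = 0) i t :
  i + t <= LL n k -> Dn n k (pth n k i) (nseq t a1) = pth n k (i + t).
Proof.
elim: t i => [|t IH] i hi; first by rewrite addn0.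
rewrite /= -/(Dn n k _ _) h1 X_path1 //; last lia.
rewrite IH; last lia. by rewrite addSnnS.
Qed.

Lemma first2 n k (hk : 3 <= k) (hn : k + 2 <= n) (a1 a2 : 'I_k) (h1 : val a1 = 0) (h2 : val a2 = 1) x :
  Dn n k x [:: a2; a1] = 0 \/ Dn n k x [:: a2; a1] = 1.
Proof.
have hl1 := ell_ge1 n k hn.
rewrite /Dn /= h1 h2.
case hb: ((x %% k.+1 == 0) && (x %/ k.+1 < ell n k)).
  move/andP: hb => [/eqP m0 hm].
  have ex : x = k.+1 * (x %/ k.+1) by rewrite {1}(divn_eq x k.+1) m0 addn0 mulnC.
  left; rewrite ex X_leaf //; apply: bs_leaf => //; lia.
right; rewrite (X_big0 n k x 2) ?hb //.
by have := X_bs n k 0 1 hl1; rewrite muln0 add0n => ->.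
Qed.

Theorem theorem7 (n k : nat) (hk : 3 <= k) (hn : k + 2 <= n) :
  synchronizing (@X_delta n k) /\
  reset_threshold_is (@X_delta n k) (2 * ell n k + 2).
Proof.
have hl1 := ell_ge1 n k hn; have hl := ell_lt n k hn.
have hLL : 2 * ell n k <= LL n k by rewrite /LL; lia.
have k0 : 0 < k by lia. have k1 : 1 < k by lia. have n0 : 0 < n by lia.
pose a1 := Ordinal k0. pose a2 := Ordinal k1.
pose w0 := [:: a2; a1] ++ nseq (2 * ell n k).-1 a1 ++ [:: a2].
have hw : forall x, Dn n k x w0 = 0.
  move=> x; rewrite /w0 Dn_cat Dn_cat.
  have [->|->] := first2 n k hk hn a1 a2 erefl erefl x.
    have e := Dn_nseq n k hk hn a1 erefl 0 ((2 * ell n k).-1) ltac:(lia).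
    rewrite pth0 // in e; rewrite e.
    have -> : 0 + (2 * ell n k).-1 = 2 * (ell n k).-1 + 1 by lia.
    rewrite pth_odd; last lia. rewrite /Dn /= X_odd //; lia.
  have e := Dn_nseq n k hk hn a1 erefl 1 ((2 * ell n k).-1) ltac:(lia).
  rewrite pth1 // in e; rewrite e.
  rewrite pth_tail; last lia. rewrite /Dn /= X_tail; last lia.
  by rewrite andbF.
have hr : reset_word (@X_delta n k) w0.
  rewrite /reset_word.
  have -> : [set delta_word (@X_delta n k) q w0 | q : 'I_n] = [set Ordinal n0].
    apply/setP => y; rewrite in_set1; apply/imsetP/eqP.
      case=> q _ ->; apply: val_inj; by rewrite (Dn_val n k hn) hw.
    move=> ->; exists (Ordinal n0) => //; apply: val_inj; by rewrite (Dn_val n k hn) hw.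
  by rewrite cards1.
have hs : size w0 = 2 * ell n k + 2.
  rewrite /w0 !size_cat size_nseq /=; lia.
split; first by exists w0.
split; first by exists w0.
move=> w; exact: lower.
Qed.
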